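(* Let $e\in\mathsf{KAT}(\Sigma,T)$. Then $e$ is a deterministic KAT expression if and only if $L(e)$ is a deterministic guarded language.
   Context: For finite $T$ (tests) and $\Sigma$ (actions): $\mathsf{BA}(T)$ is generated by $b::=\mathsf{false}\mid\mathsf{true}\mid t\in T\mid b\vee c\mid b\wedge c\mid\overline b$; $\mathsf{KAT}(\Sigma,T)$ by $e::=b\mid p\in\Sigma\mid e+f\mid e\cdot f\mid e^*$. Relational semantics: for a set $S$, $\tau:T\to2^S$ and $\sigma:\Sigma\to2^{S\times S}$, tests are interpreted as subsets $[\![b]\!]_\tau\subseteq S$ in the Boolean way, and $\mathcal{R}[\![b]\!]=\{\langle s,s\rangle:s\in[\![b]\!]_\tau\}$, $\mathcal{R}[\![p]\!]=\sigma(p)$, $\mathcal{R}[\![e+f]\!]=\mathcal{R}[\![e]\!]\cup\mathcal{R}[\![f]\!]$, $\mathcal{R}[\![ef]\!]=\mathcal{R}[\![e]\!]\circ\mathcal{R}[\![f]\!]$ (first $e$ then $f$), $\mathcal{R}[\![e^*]\!]$ = reflexive-transitive closure of $\mathcal{R}[\![e]\!]$. $e$ is a deterministic KAT expression if for all $S,\tau,\sigma$ such that every $\sigma(p)$ is the graph of a partial function, $\mathcal{R}[\![e]\!]^\sigma_\tau$ is the graph of a partial function. Language semantics: atoms $\mathsf{At}_T=2^T$, $\alpha\le b$ meaning $b$ holds under the assignment making exactly the tests in $\alpha$ true; guarded strings are words in $\mathsf{At}_T(\Sigma\mathsf{At}_T)^*$; $w'\alpha\diamond\alpha x'=w'\alpha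 x'$; $L\diamond K=\{w\diamond x:w\in L,x\in K,\text{defined}\}$; $L^{(0)}=\mathsf{At}_T$, $L^{(n+1)}=L\diamond L^{(n)}$, $L^{( * )}=\bigcup_nL^{(n)}$; $L(b)=\{\alpha:\alpha\le b\}$, $L(p)=\{\alpha p\beta\}$, $L(e+f)=L(e)\cup L(f)$, $L(ef)=L(e)\diamond L(f)$, $L(e^* )=L(e)^{( * )}$. A set $L$ of guarded strings is deterministic if for all distinct $w,w'\in L$: (i) $w$ is not a proper prefix of $w'$, (ii) the first position where $w,w'$ differ is an atom. *)

(* Defs.v *)
From mathcomp Require Import all_boot.
Set Implicit Arguments.
Unset Strict Implicit.
Unset Printing Implicit Defensive.

Inductive bexp (T : Type) : Type :=
| BFalse | BTrue | BTest of T
| BOr of bexp T & bexp T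
| BAnd of bexp T & bexp T
| BNot of bexp T.

Inductive kexp (Sigma T : Type) : Type :=
| KTest of bexp T
| KAct of Sigma
| KPlus of kexp Sigma T & kexp Sigma T
| KSeq of kexp Sigma T & kexp Sigma T
| KStar of kexp Sigma T.

Arguments BFalse {T}. Arguments BTrue {T}.

Fixpoint tsem (T S : Type) (tau : T -> S -> Prop) (b : bexp T) : S -> Prop :=
  match b with
  | BFalse => fun _ => False
  | BTrue => fun _ => True
  | BTest t => tau t
  | BOr b c => fun s => tsem tau b s \/ tsem tau c s
  | BAnd b c => fun s => tsem tau b s /\ tsem tau c s
  | BNot b => fun s => ~ tsem tau b s
  end.

Definition rcomp (S : Type) (R Q : S -> S -> Prop) : S -> S -> Prop :=
  fun x z => exists y, R x y /\ Q y z.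

Inductive rtc (S : Type) (R : S -> S -> Prop) : S -> S -> Prop :=
| rtc_refl x : rtc R x x
| rtc_step x y z : R x y -> rtc R y z -> rtc R x z.

Fixpoint rsem (Sigma T S : Type) (tau : T -> S -> Prop)
    (sigma : Sigma -> S -> S -> Prop) (e : kexp Sigma T) : S -> S -> Prop :=
  match e with
  | KTest b => fun x y => x = y /\ tsem tau b x
  | KAct p => sigma p
  | KPlus e f => fun x y => rsem tau sigma e x y \/ rsem tau sigma f x y
  | KSeq e f => rcomp (rsem tau sigma e) (rsem tau sigma f)
  | KStar e => rtc (rsem tau sigma e)
  end.

Definition partial_fun (S : Type) (R : S -> S -> Prop) : Prop :=
  forall x y z, R x y -> R x z -> y = z.

Definition deterministic_kat (Sigma T : Type) (e : kexp Sigma T) : Prop :=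
  forall (S : Type) (tau : T -> S -> Prop) (sigma : Sigma -> S -> S -> Prop),
    (forall p, partial_fun (sigma p)) -> partial_fun (rsem tau sigma e).

Definition atom (T : finType) := {set T}.

(* alpha <= b : b holds when exactly the tests in alpha are true *)
Fixpoint atom_le (T : finType) (a : atom T) (b : bexp T) : bool :=
  match b with
  | BFalse => false
  | BTrue => true
  | BTest t => t \in a
  | BOr b c => atom_le a b || atom_le a c
  | BAnd b c => atom_le a b && atom_le a c
  | BNot b => ~~ atom_le a b
  end.

(* guarded string alpha0 p1 alpha1 ... pn alphan, as (alpha0, [(p1,alpha1);...]) *)
Definition gstring (Sigma T : finType) := (atom T * seq (Sigma * atom T))%type.

Definition glang (Sigma T : finType) := gstring Sigma T -> Prop.

Definition last_atom (Sigma T : finType) (w : gstring Sigma T) : atom T :=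
  last w.1 (map snd w.2).

Definition fuse (Sigma T : finType) (L K : glang Sigma T) : glang Sigma T :=
  fun g => exists w x, L w /\ K x /\ last_atom w = x.1 /\ g = (w.1, w.2 ++ x.2).

Fixpoint fpow (Sigma T : finType) (L : glang Sigma T) (n : nat) : glang Sigma T :=
  match n with
  | 0 => fun g => g.2 = [::]
  | n.+1 => fuse L (fpow L n)
  end.

Definition fstar (Sigma T : finType) (L : glang Sigma T) : glang Sigma T :=
  fun g => exists n, fpow L n g.

Fixpoint lang (Sigma T : finType) (e : kexp Sigma T) : glang Sigma T :=
  match e with
  | KTest b => fun g => g.2 = [::] /\ atom_le g.1 b
  | KAct p => fun g => exists b, g.2 = [:: (p, b)]
  | KPlus e f => fun g => lang e g \/ lang f g
  | KSeq e f => fuse (lang e) (lang f)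
  | KStar e => fstar (lang e)
  end.

Definition gflat (Sigma T : finType) (w : gstring Sigma T) : seq (atom T + Sigma) :=
  inl w.1 :: flatten (map (fun pa => [:: inr pa.1; inl pa.2]) w.2).

Definition is_atom_sym (A B : Type) (x : A + B) : bool :=
  if x is inl _ then true else false.

Definition deterministic_lang (Sigma T : finType) (L : glang Sigma T) : Prop :=
  forall w w', L w -> L w' -> w <> w' ->
    (~ exists u, u <> [::] /\ gflat w' = gflat w ++ u) /\
    (* (ii) the first position where w, w' differ is an atom *)
    (forall (i : nat) (d : atom T + Sigma),
        i < size (gflat w) -> i < size (gflat w') ->
        take i (gflat w) = take i (gflat w') ->
        nth d (gflat w) i <> nth d (gflat w') i ->
        is_atom_sym (nth d (gflat w) i)).

(* Main.v *)
Require Import Defs.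
From mathcomp Require Import all_boot.
From Stdlib Require Import ClassicalEpsilon.

Set Implicit Arguments.
Unset Strict Implicit.
Unset Printing Implicit Defensive.

Section Aux.
Variables (Sigma T : finType).
Local Notation sym := (atom T + Sigma)%type.

Definition fl (l : seq (Sigma * atom T)) : seq sym :=
  flatten (map (fun pa => [:: inr pa.1; inl pa.2]) l).

Lemma fl_cat l1 l2 : fl (l1 ++ l2) = fl l1 ++ fl l2.
Proof. by rewrite /fl map_cat flatten_cat. Qed.

Lemma catI_l (x y z : seq sym) : x ++ y = x ++ z -> y = z.
Proof. by elim: x => //= a x IH [] /IH. Qed.

Lemma take_mid (x : seq sym) a b z : take (size x).+1 (x ++ a :: b :: z) = x ++ [:: a].
Proof. by elim: x => //= c x ->. Qed.

Lemma nth_mid d (x : seq sym) a b z : nth d (x ++ a :: b :: z) (size x).+1 = b.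
Proof. by elim: x. Qed.

Lemma nth_mid0 d (x : seq sym) a z : nth d (x ++ a :: z) (size x) = a.
Proof. by elim: x. Qed.

Lemma size_mid (x : seq sym) a b z : (size x).+1 < size (x ++ a :: b :: z).
Proof. by elim: x => //= c x IH; rewrite ltnS. Qed.

Lemma tsem_match (S : Type) (tau : T -> S -> Prop) (a : atom T) (s : S) :
  (forall t, t \in a <-> tau t s) -> forall b, tsem tau b s <-> atom_le a b.
Proof.
move=> H; elim=> /=.
- by split.
- by split.
- by move=> t; rewrite H.
- move=> b IHb c IHc; rewrite IHb IHc; split; first by case=> ->; rewrite ?orbT.
  by case/orP; auto.
- move=> b IHb c IHc; rewrite IHb IHc; split; first by case=> -> ->.
  by case/andP.
- move=> b IHb; rewrite IHb; split; first by move/negP.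
  by move/negP.
Qed.

Section Model.
Variables (A B : seq sym).
Definition allowed (y : seq sym) := exists z, y ++ z = A \/ y ++ z = B.
Definition lastat (x : seq sym) : atom T :=
  match last (inl set0) x with inl a => a | inr _ => set0 end.
Definition tauM (t : T) (x : seq sym) : Prop := t \in lastat x.
Definition sigmaM (p : Sigma) (x y : seq sym) : Prop :=
  exists b, y = x ++ [:: inr p; inl b] /\ allowed y.

Lemma allowed_cat x y : allowed (x ++ y) -> allowed x.
Proof. by case=> z H; exists (y ++ z); rewrite catA. Qed.

Lemma lastat_fl x a l : lastat x = a -> lastat (x ++ fl l) = last a (map snd l).
Proof.
elim: l x a => [|[p b] l IH] x a /=; first by rewrite cats0.
move=> _; have -> : x ++ [:: inr p, inl b & fl l] = (x ++ [:: inr p; inl b]) ++ fl l.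
  by rewrite -catA.
by apply: IH; rewrite /lastat last_cat.
Qed.

Lemma soundM (e : kexp Sigma T) : forall g x, lang e g -> lastat x = g.1 ->
  allowed (x ++ fl g.2) -> rsem tauM sigmaM e x (x ++ fl g.2).
Proof.
elim: e => [b|p|e IHe f IHf|e IHe f IHf|e IHe] g x.
- case=> E Hb Hx _; rewrite E cats0 /=; split => //.
  by apply/(tsem_match (a := lastat x)) => //; rewrite Hx.
- case=> b E _ Hal; exists b; split => //; by rewrite E.
- by case=> H Hx Hal; [left; apply: IHe | right; apply: IHf].
- case=> w [y [Hw [Hy [Hla E]]]]; rewrite E /= => Hx; rewrite fl_cat => Hal.
  exists (x ++ fl w.2); split.
    by apply: IHe => //; apply: (@allowed_cat _ (fl y.2)); rewrite -catA.
  rewrite catA; apply: IHf => //; last by rewrite -catA.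
  by rewrite -Hla /last_atom; apply: lastat_fl.
- case=> n; elim: n g x => [|n IHn] g x /=.
    by move=> -> _ _; rewrite cats0; constructor.
  case=> w [y [Hw [Hy [Hla E]]]]; rewrite E /= => Hx; rewrite fl_cat => Hal.
  apply: (@rtc_step _ _ _ (x ++ fl w.2)).
    by apply: IHe => //; apply: (@allowed_cat _ (fl y.2)); rewrite -catA.
  rewrite catA; apply: IHn => //; last by rewrite -catA.
  by rewrite -Hla /last_atom; apply: lastat_fl.
Qed.

Lemma sameA (x : seq sym) p b1 b2 z1 z2 C :
  (x ++ [:: inr p; inl b1]) ++ z1 = C -> (x ++ [:: inr p; inl b2]) ++ z2 = C -> b1 = b2.
Proof.
rewrite -!catA => H1; rewrite -H1 => /catI_l; by case.
Qed.

Lemma mixedA d i (x : seq sym) p b1 b2 z1 z2 :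
  (x ++ [:: inr p; inl b1]) ++ z1 = A -> (x ++ [:: inr p; inl b2]) ++ z2 = B ->
  take i A = take i B -> nth d A i <> nth d B i -> i < size A -> i < size B ->
  b1 = b2 \/ (nth d A i = inl b1 /\ nth d B i = inl b2).
Proof.
rewrite -!catA /= => HA HB Ht Hn HiA HiB.
case: (b1 =P b2) => [|Hb]; [by left|right].
have tA := take_mid x (inr p) (inl b1) z1; rewrite HA in tA.
have tB := take_mid x (inr p) (inl b2) z2; rewrite HB in tB.
have nA := nth_mid d x (inr p) (inl b1) z1; rewrite HA in nA.
have nB := nth_mid d x (inr p) (inl b2) z2; rewrite HB in nB.
have sA := size_mid x (inr p) (inl b1) z1; rewrite HA in sA.
have sB := size_mid x (inr p) (inl b2) z2; rewrite HB in sB.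
case: (ltngtP i (size x).+1) => Hk.
- exfalso; apply: Hn; rewrite -(nth_take d Hk A) -(nth_take d Hk B) tA tB //.
- exfalso; apply: Hb; move: nA nB.
  rewrite -(nth_take d Hk A) -(nth_take d Hk B) Ht => -> ; by case.
- by rewrite Hk.
Qed.

End Model.

Section Gen.
Variables (S : Type) (tau : T -> S -> Prop) (sigma : Sigma -> S -> S -> Prop).

Definition matches (a : atom T) (s : S) := forall t, t \in a <-> tau t s.
Definition dec (P : Prop) : bool := if excluded_middle_informative P then true else false.
Definition atomof (s : S) : atom T := [set t | dec (tau t s)].

Lemma matches_atomof s : matches (atomof s) s.
Proof.
move=> t; rewrite inE /dec; case: excluded_middle_informative => //; split=> //.
Qed.

Lemma matches_uniq a b s : matches a s -> matches b s -> a = b.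
Proof.
move=> Ha Hb; apply/setP => t; apply/idP/idP.
  by move/Ha/Hb.
by move/Hb/Ha.
Qed.

Fixpoint runl (a : atom T) (l : seq (Sigma * atom T)) (s s' : S) : Prop :=
  match l with
  | [::] => matches a s /\ s = s'
  | (p, b) :: l' => matches a s /\ exists s1, sigma p s s1 /\ runl b l' s1 s'
  end.

Lemma runl_head a l s s' : runl a l s s' -> matches a s.
Proof. by case: l => [|[p b] l] []. Qed.

Lemma runl_last a l s s' : runl a l s s' -> matches (last a (map snd l)) s'.
Proof.
elim: l a s => [|[p b] l IH] a s /=; first by case=> ? <-.
by case=> _ [s1 [_ /IH]].
Qed.

Lemma runl_cat a l1 l2 s y s' : runl a l1 s y ->
  runl (last a (map snd l1)) l2 y s' -> runl a (l1 ++ l2) s s'.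
Proof.
elim: l1 a s => [|[p b] l IH] a s /=.
  by case=> _ <-.
case=> Ha [s1 [Hs H]] H2; split => //; exists s1; split => //.
exact: IH H2.
Qed.

Lemma complete (e : kexp Sigma T) s s' : rsem tau sigma e s s' ->
  exists g, lang e g /\ runl g.1 g.2 s s'.
Proof.
elim: e s s' => [b|p|e IHe f IHf|e IHe f IHf|e IHe] s s' /=.
- case=> <- Hb; exists (atomof s, [::]); split => //=.
  split => //; exact/(tsem_match (matches_atomof s)).
  split => //; exact: matches_atomof.
- move=> H; exists (atomof s, [:: (p, atomof s')]) => /=; split; first by exists (atomof s').
  split; first exact: matches_atomof.
  by exists s'; split => //; split => //; exact: matches_atomof.
- by case=> [/IHe|/IHf] [g [Hg Hr]]; exists g; auto.
- case=> y [/IHe [g1 [H1 R1]] /IHf [g2 [H2 R2]]].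
  have Hla : last_atom g1 = g2.1.
    exact: matches_uniq (runl_last R1) (runl_head R2).
  exists (g1.1, g1.2 ++ g2.2); split.
    by exists g1, g2.
  apply: runl_cat R1 _; by rewrite -/(last_atom g1) Hla.
- elim=> [x|x y z Hxy _ [g2 [[n H2] R2]]].
    by exists (atomof x, [::]); split; [exists 0|split => //; exact: matches_atomof].
  have [g1 [H1 R1]] := IHe _ _ Hxy.
  have Hla : last_atom g1 = g2.1.
    exact: matches_uniq (runl_last R1) (runl_head R2).
  exists (g1.1, g1.2 ++ g2.2); split.
    by exists n.+1, g1, g2.
  apply: runl_cat R1 _; by rewrite -/(last_atom g1) Hla.
Qed.

Hypothesis Hf : forall p, partial_fun (sigma p).

Lemma runl_det a l s s1 s2 : runl a l s s1 -> runl a l s s2 -> s1 = s2.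
Proof.
elim: l a s => [|[p b] l IH] a s /=; first by case=> _ <- [_ <-].
case=> _ [t1 [H1 R1]] [_ [t2 [H2 R2]]].
move: R1; rewrite (Hf H1 H2) => R1; exact: IH R1 R2.
Qed.

Lemma runl_cmp a1 l1 a2 l2 s s1 s2 : runl a1 l1 s s1 -> runl a2 l2 s s2 ->
  (a1, l1) = (a2, l2) \/
  (exists u, u <> [::] /\ gflat (a2, l2) = gflat (a1, l1) ++ u) \/
  (exists u, u <> [::] /\ gflat (a1, l1) = gflat (a2, l2) ++ u) \/
  (exists pre r1 r2 p q, p <> q /\ gflat (a1, l1) = pre ++ inr p :: r1 /\
      gflat (a2, l2) = pre ++ inr q :: r2).
Proof.
move=> R1 R2; have Ha := matches_uniq (runl_head R1) (runl_head R2); subst a2.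
elim: l1 a1 s l2 R1 R2 => [|[p b] l1 IH] a s [|[q c] l2] /=.
- by left.
- move=> _ _; right; left; exists (inr q :: inl c :: fl l2); done.
- move=> _ _; right; right; left; exists (inr p :: inl b :: fl l1); done.
- case=> _ [t1 [H1 R1]] [_ [t2 [H2 R2]]].
  case: (p =P q) => [Epq|Npq]; last first.
    right; right; right; exists [:: inl a], (inl b :: fl l1), (inl c :: fl l2), p, q.
    done.
  subst q; move: R2; rewrite -(Hf H1 H2) => R2.
  have Hbc := matches_uniq (runl_head R1) (runl_head R2); subst c.
  case: (IH b t1 l2 R1 R2) => [[->]|[[u [Hu E]]|[[u [Hu E]]|[pre [r1 [r2 [p' [q [Hpq [E1 E2]]]]]]]]]].
  + by left.
  + right; left; exists u; split => //=; move: E; rewrite /gflat /= => ->. done.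
  + right; right; left; exists u; split => //=; move: E; rewrite /gflat /= => ->. done.
  + right; right; right; exists [:: inl a, inr p & pre], r1, r2, p', q; split => //.
    move: E1 E2; rewrite /gflat /= => -> ->. done.
Qed.

End Gen.
End Aux.

Theorem proposition4p4 (Sigma T : finType) (e : kexp Sigma T) :
  deterministic_kat e <-> deterministic_lang (lang e).
Proof.
split.
- move=> Hdet w w' Hw Hw' Hneq; split.
  + case=> u [Hu E].
    pose A := gflat w'.
    have Hfun : forall p, partial_fun (sigmaM A A p).
      move=> p x y1 y2 [b1 [-> [z1 H1]]] [b2 [-> [z2 H2]]].
      have H1' : (x ++ [:: inr p; inl b1]) ++ z1 = A by case: H1.
      have H2' : (x ++ [:: inr p; inl b2]) ++ z2 = A by case: H2.
      by rewrite (sameA H1' H2').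
    have Hpf := Hdet _ (@tauM Sigma T) _ Hfun.
    have R1 := @soundM _ _ A A e w [:: inl w.1] Hw (erefl _) (ex_intro _ u (or_introl (esym E))).
    have R2 := @soundM _ _ A A e w' [:: inl w'.1] Hw' (erefl _) (ex_intro _ [::] (or_introl (cats0 _))).
    have Eh : w'.1 = w.1 by move: E; rewrite /gflat /=; case.
    rewrite Eh in R2.
    have E' := Hpf _ _ _ R1 R2.
    have E2 : gflat w' = gflat w by rewrite /gflat Eh; exact (esym E').
    move: E; rewrite E2 => /(congr1 size).
    rewrite size_cat -{1}(addn0 (size (gflat w))) => /eqP; rewrite eqn_add2l.
    by case: u Hu.
  + move=> i d Hi Hi' Ht Hn.
    case Hat: (is_atom_sym (nth d (gflat w) i)) => //; exfalso.
    pose A := gflat w; pose B := gflat w'.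
    have Hfun : forall p, partial_fun (sigmaM A B p).
      move=> p x y1 y2 [b1 [-> [z1 H1]]] [b2 [-> [z2 H2]]].
      suff -> : b1 = b2 by [].
      case: H1 => H1; case: H2 => H2.
      * exact: sameA H1 H2.
      * case: (mixedA H1 H2 Ht Hn Hi Hi') => // [[E _]].
        by rewrite E in Hat.
      * case: (@mixedA _ _ B A d i x p b1 b2 z1 z2 H1 H2 (esym Ht)
                 (fun E => Hn (esym E)) Hi' Hi) => // [[_ E]].
        by rewrite E in Hat.
      * exact: sameA H1 H2.
    have Hpf := Hdet _ (@tauM Sigma T) _ Hfun.
    have R1 := @soundM _ _ A B e w [:: inl w.1] Hw (erefl _) (ex_intro _ [::] (or_introl (cats0 _))).
    have R2 := @soundM _ _ A B e w' [:: inl w'.1] Hw' (erefl _) (ex_intro _ [::] (or_intror (cats0 _))).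
    case: i Hi Hi' Ht Hn Hat => [|i] Hi Hi' Ht Hn Hat; first by [].
    have Eh : w'.1 = w.1 by move: Ht; rewrite /gflat /=; case.
    rewrite Eh in R2.
    have E' := Hpf _ _ _ R1 R2.
    have E2 : gflat w' = gflat w by rewrite /gflat Eh; exact (esym E').
    by apply: Hn; rewrite E2.
- move=> Hdl S tau sigma Hf s s1 s2 H1 H2.
  have [[a1 l1] [G1 R1]] := complete H1.
  have [[a2 l2] [G2 R2]] := complete H2.
  case: (runl_cmp Hf R1 R2) => [[Ea El]|[[u [Hu E]]|[[u [Hu E]]|[pre [r1 [r2 [p [q [Hpq [E1 E2]]]]]]]]]].
  + subst a2 l2; move: R1 R2; exact: runl_det.
  + exfalso.
    have Hne : (a1, l1) <> (a2, l2).
      move=> Eg; rewrite -Eg in E; move: E => /(congr1 size).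
      rewrite size_cat -{1}(addn0 (size _)) => /eqP; rewrite eqn_add2l.
      by case: u Hu.
    have [Hi _] := Hdl _ _ G1 G2 Hne.
    by apply: Hi; exists u.
  + exfalso.
    have Hne : (a2, l2) <> (a1, l1).
      move=> Eg; rewrite -Eg in E; move: E => /(congr1 size).
      rewrite size_cat -{1}(addn0 (size _)) => /eqP; rewrite eqn_add2l.
      by case: u Hu.
    have [Hi _] := Hdl _ _ G2 G1 Hne.
    by apply: Hi; exists u.
  + exfalso.
    have Hne : (a1, l1) <> (a2, l2).
      move=> Eg; rewrite -Eg E1 in E2.
      by move/catI_l: E2 => [].
    have [_ Hii] := Hdl _ _ G1 G2 Hne.
    have := Hii (size pre) (inr p).
    rewrite E1 E2 !nth_mid0 !take_size_cat // !size_cat /= !addnS !ltnS !leq_addr.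
    have Hneq : inr p <> inr q :> (atom T + Sigma) by case.
    by move=> H; have := H isT isT erefl Hneq.
Qed.
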